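(* Let $n\ge1$ and let $K_2$ be the closure of the $4$--braid $(\sigma_2\sigma_1\sigma_3\sigma_2)(\sigma_1\sigma_2\sigma_3)^{4n}\sigma_3^{-1}(\sigma_2\sigma_3)^6$. Then, up to units $\pm t^i$, \[\Delta_{K_2}(t)=\sum_{i=0}^n(t^{8n+12+4i}-t^{8n+11+4i})+(t^{8n+9}-t^{8n+8})+\sum_{i=0}^{2n-1}(t^{4n+8+2i}-t^{4n+7+2i})+(t^{4n+6}-t^{4n+4})+(t^{4n+3}-t^{4n+1})+\sum_{i=0}^{n-1}(t^{4+4i}-t^{1+4i})+1.\]
   Context: $\sigma_1,\sigma_2,\sigma_3$ are the standard Artin generators of the $4$--strand braid group; $\Delta_K$ denotes the Alexander polynomial. *)

(* Defs.v *)
From HB Require Import structures.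
From mathcomp Require Import all_boot all_order all_algebra.
Set Implicit Arguments. Unset Strict Implicit. Unset Printing Implicit Defensive.
Import Order.TTheory GRing.Theory Num.Theory.
Local Open Scope ring_scope.

(* Laurent polynomials in t are handled inside the field of rational
   functions Q(t) realised as {fraction {poly int}}, with t = 'X. *)
Definition LT := {fraction {poly int}}.
Definition tvar : LT := tofrac 'X.
Definition polyF (p : {poly int}) : LT := tofrac p.

(* A braid word on m strands: a sequence of nonzero integers; the letter
   k > 0 stands for sigma_k and -k for sigma_k^{-1} (1 <= k <= m-1). *)
Definition braid_word := seq int.

(* Unreduced Burau matrix of sigma_k (1-based k) on m strands:
   identity except for the 2x2 block [[1-t, t],[1, 0]] at rows/columns k-1, k. *)
Definition burau_gen (m k : nat) : 'M[LT]_m :=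
  \matrix_(i < m, j < m)
    if (i == k.-1 :> nat) && (j == k.-1 :> nat) then 1 - tvar
    else if (i == k.-1 :> nat) && (j == k :> nat) then tvar
    else if (i == k :> nat) && (j == k.-1 :> nat) then 1
    else if (i == k.-1 :> nat) || (i == k :> nat) then 0
    else (i == j)%:R.

Definition burau_letter (m : nat) (g : int) : 'M[LT]_m :=
  if (0 <= g)%R then burau_gen m `|g|%N else invmx (burau_gen m `|g|%N).

Definition burau (m : nat) (w : braid_word) : 'M[LT]_m :=
  foldr (fun g M => burau_letter m g *m M) 1%:M w.

(* Alexander polynomial of the closure of a braid on m.+1 strands:
   the (m x m) minor (last row and column deleted) of the Alexander matrix
   I - Burau(beta), which is the abelianized Fox Jacobian of the Artin
   presentation < x_1..x_{m+1} | x_i = beta(x_i) > of the knot group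
   of the closure.  Well defined up to units +-t^k (for knots). *)
Definition alexander_closure (m : nat) (w : braid_word) : LT :=
  \det (\matrix_(i < m, j < m)
          ((1%:M - burau m.+1 w) (lift ord_max i) (lift ord_max j))).

Definition eq_up_to_units (a b : LT) : Prop :=
  exists (s : bool) (k : int), a = (-1) ^+ s * tvar ^ k * b.

Definition K2_word (n : nat) : braid_word :=
  [:: 2; 1; 3; 2]%R ++ flatten (nseq (4 * n) [:: 1; 2; 3]%R) ++ [:: (-3)%R]
    ++ flatten (nseq 6 [:: 2; 3]%R).

(* Main.v *)
Require Import Defs.
From HB Require Import structures.
From mathcomp Require Import all_boot all_order all_algebra.
From mathcomp Require Import ring lra zify.
Import Order.TTheory GRing.Theory Num.Theory.
Local Open Scope ring_scope.

Notation t := tvar.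
Notation ti := (tvar^-1).

Lemma tneq0 : t != 0.
Proof. by rewrite /tvar tofrac_eq0 polyX_eq0. Qed.

Definition mk4 (l : seq (seq LT)) : 'M[LT]_4 :=
  \matrix_(i < 4, j < 4) nth 0 (nth [::] l i) j.

Lemma mk4E L i j : mk4 L i j = nth 0 (nth [::] L i) j.
Proof. by rewrite mxE. Qed.
Lemma mulE4 (A B : 'M[LT]_4) i j : (A *m B) i j = A i (@Ordinal 4 0 isT) * B (@Ordinal 4 0 isT) j
  + A i (@Ordinal 4 1 isT) * B (@Ordinal 4 1 isT) j + A i (@Ordinal 4 2 isT) * B (@Ordinal 4 2 isT) j
  + A i (@Ordinal 4 3 isT) * B (@Ordinal 4 3 isT) j.
Proof. rewrite mxE !big_ord_recl big_ord0 addr0 !addrA. by congr (_ + _ + _ + _); congr (A i _ * B _ j); apply: val_inj. Qed.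

Ltac mxeq := let i := fresh "i" in let j := fresh "j" in
  apply/matrixP => i j; rewrite ?mulE4 ?mk4E ?mxE;
  case: i => [[|[|[|[|?]]]] ?] //; case: j => [[|[|[|[|?]]]] ?] //=.

Lemma det3 (R : comRingType) (f : nat -> nat -> R) : \det (\matrix_(i < 3, j < 3) f i j) =
  f 0%N 0%N * (f 1%N 1%N * f 2%N 2%N - f 1%N 2%N * f 2%N 1%N) - f 0%N 1%N * (f 1%N 0%N * f 2%N 2%N - f 1%N 2%N * f 2%N 0%N)
  + f 0%N 2%N * (f 1%N 0%N * f 2%N 1%N - f 1%N 1%N * f 2%N 0%N).
Proof.
rewrite (expand_det_row _ 0) !big_ord_recl big_ord0 /cofactor.
rewrite !(expand_det_row _ 0) !big_ord_recl big_ord0 /cofactor !det_mx11 !mxE /=.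
rewrite !big_ord0 /bump /=. ring.
Qed.

Definition fL (L : seq (seq LT)) (a b : nat) : LT := (a == b)%:R - nth 0 (nth [::] L a) b.

Lemma alex_mk4 (L : seq (seq LT)) :
  \det (\matrix_(i < 3, j < 3) ((1%:M - mk4 L) (lift ord_max i) (lift ord_max j))) =
  fL L 0%N 0%N * (fL L 1%N 1%N * fL L 2%N 2%N - fL L 1%N 2%N * fL L 2%N 1%N) - fL L 0%N 1%N * (fL L 1%N 0%N * fL L 2%N 2%N - fL L 1%N 2%N * fL L 2%N 0%N)
  + fL L 0%N 2%N * (fL L 1%N 0%N * fL L 2%N 1%N - fL L 1%N 1%N * fL L 2%N 0%N).
Proof.
rewrite -det3; congr (\det _); apply/matrixP.
case=> [[|[|[|?]]] ?] //; case=> [[|[|[|?]]] ?] //; rewrite !mxE //=.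
Qed.

Lemma burau_cons m a w : burau m (a :: w) = burau_letter m a *m burau m w.
Proof. by []. Qed.

Lemma burau_cat m w1 w2 : burau m (w1 ++ w2) = burau m w1 *m burau m w2.
Proof. elim: w1 => [|a w IH]; first by rewrite /= mul1mx. by rewrite cat_cons !burau_cons IH mulmxA. Qed.

Lemma burau_pow m w k : burau m.+1 (flatten (nseq k w)) = (burau m.+1 w) ^+ k.
Proof.
elim: k => [|k IH] /=; first by [].
by rewrite burau_cat IH exprS mulmxE.
Qed.

Ltac sidec := lazymatch goal with
  | |- is_true true => reflexivity
  | |- is_true (tvar != 0) => exact tneq0
  | |- ?g => idtac "SIDE" g; fail
  end.
Notation G1l := [:: [:: (1%:R - t); (t); 0; 0]; [:: (1%:R); 0; 0; 0]; [:: 0; 0; (1%:R); 0]; [:: 0; 0; 0; (1%:R)]].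

Notation G2l := [:: [:: (1%:R); 0; 0; 0]; [:: 0; (1%:R - t); (t); 0]; [:: 0; (1%:R); 0; 0]; [:: 0; 0; 0; (1%:R)]].

Notation G3l := [:: [:: (1%:R); 0; 0; 0]; [:: 0; (1%:R); 0; 0]; [:: 0; 0; (1%:R - t); (t)]; [:: 0; 0; (1%:R); 0]].

Notation Gi3l := [:: [:: (1%:R); 0; 0; 0]; [:: 0; (1%:R); 0; 0]; [:: 0; 0; 0; (1%:R)]; [:: 0; 0; (ti); (- ti + 1%:R)]].

Lemma pA1 : mk4 [:: [:: (1%:R); 0; 0; 0]; [:: 0; (1%:R); 0; 0]; [:: 0; 0; (1%:R - t); (t)]; [:: 0; 0; (1%:R); 0]] *m mk4 [:: [:: (1%:R); 0; 0; 0]; [:: 0; (1%:R - t); (t); 0]; [:: 0; (1%:R); 0; 0]; [:: 0; 0; 0; (1%:R)]] = mk4 [:: [:: (1%:R); 0; 0; 0]; [:: 0; (1%:R - t); (t); 0]; [:: 0; (1%:R - t); 0; (t)]; [:: 0; (1%:R); 0; 0]].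
Proof. by mxeq; ring. Qed.

Lemma pA2 : mk4 [:: [:: (1%:R - t); (t); 0; 0]; [:: (1%:R); 0; 0; 0]; [:: 0; 0; (1%:R); 0]; [:: 0; 0; 0; (1%:R)]] *m mk4 [:: [:: (1%:R); 0; 0; 0]; [:: 0; (1%:R - t); (t); 0]; [:: 0; (1%:R - t); 0; (t)]; [:: 0; (1%:R); 0; 0]] = mk4 [:: [:: (1%:R - t); (t - t ^+ 2); (t ^+ 2); 0]; [:: (1%:R); 0; 0; 0]; [:: 0; (1%:R - t); 0; (t)]; [:: 0; (1%:R); 0; 0]].
Proof. by mxeq; ring. Qed.

Lemma pA3 : mk4 [:: [:: (1%:R); 0; 0; 0]; [:: 0; (1%:R - t); (t); 0]; [:: 0; (1%:R); 0; 0]; [:: 0; 0; 0; (1%:R)]] *m mk4 [:: [:: (1%:R - t); (t - t ^+ 2); (t ^+ 2); 0]; [:: (1%:R); 0; 0; 0]; [:: 0; (1%:R - t); 0; (t)]; [:: 0; (1%:R); 0; 0]] = mk4 [:: [:: (1%:R - t); (t - t ^+ 2); (t ^+ 2); 0]; [:: (1%:R - t); (t - t ^+ 2); 0; (t ^+ 2)]; [:: (1%:R); 0; 0; 0]; [:: 0; (1%:R); 0; 0]].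
Proof. by mxeq; ring. Qed.

Lemma pS1 : mk4 [:: [:: (1%:R); 0; 0; 0]; [:: 0; (1%:R - t); (t); 0]; [:: 0; (1%:R); 0; 0]; [:: 0; 0; 0; (1%:R)]] *m mk4 [:: [:: (1%:R); 0; 0; 0]; [:: 0; (1%:R); 0; 0]; [:: 0; 0; (1%:R - t); (t)]; [:: 0; 0; (1%:R); 0]] = mk4 [:: [:: (1%:R); 0; 0; 0]; [:: 0; (1%:R - t); (t - t ^+ 2); (t ^+ 2)]; [:: 0; (1%:R); 0; 0]; [:: 0; 0; (1%:R); 0]].
Proof. by mxeq; ring. Qed.

Lemma pS2 : mk4 [:: [:: (1%:R - t); (t); 0; 0]; [:: (1%:R); 0; 0; 0]; [:: 0; 0; (1%:R); 0]; [:: 0; 0; 0; (1%:R)]] *m mk4 [:: [:: (1%:R); 0; 0; 0]; [:: 0; (1%:R - t); (t - t ^+ 2); (t ^+ 2)]; [:: 0; (1%:R); 0; 0]; [:: 0; 0; (1%:R); 0]] = mk4 [:: [:: (1%:R - t); (t - t ^+ 2); (t ^+ 2 - t ^+ 3); (t ^+ 3)]; [:: (1%:R); 0; 0; 0]; [:: 0; (1%:R); 0; 0]; [:: 0; 0; (1%:R); 0]].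
Proof. by mxeq; ring. Qed.

Lemma pS3 : mk4 [:: [:: (1%:R - t); (t - t ^+ 2); (t ^+ 2 - t ^+ 3); (t ^+ 3)]; [:: (1%:R); 0; 0; 0]; [:: 0; (1%:R); 0; 0]; [:: 0; 0; (1%:R); 0]] *m mk4 [:: [:: (1%:R - t); (t - t ^+ 2); (t ^+ 2 - t ^+ 3); (t ^+ 3)]; [:: (1%:R); 0; 0; 0]; [:: 0; (1%:R); 0; 0]; [:: 0; 0; (1%:R); 0]] = mk4 [:: [:: (1%:R - t); (t - t ^+ 2); (t ^+ 2 - t ^+ 3 + t ^+ 4); (t ^+ 3 - t ^+ 4)]; [:: (1%:R - t); (t - t ^+ 2); (t ^+ 2 - t ^+ 3); (t ^+ 3)]; [:: (1%:R); 0; 0; 0]; [:: 0; (1%:R); 0; 0]].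
Proof. by mxeq; ring. Qed.

Lemma pS4 : mk4 [:: [:: (1%:R - t); (t - t ^+ 2); (t ^+ 2 - t ^+ 3); (t ^+ 3)]; [:: (1%:R); 0; 0; 0]; [:: 0; (1%:R); 0; 0]; [:: 0; 0; (1%:R); 0]] *m mk4 [:: [:: (1%:R - t); (t - t ^+ 2); (t ^+ 2 - t ^+ 3 + t ^+ 4); (t ^+ 3 - t ^+ 4)]; [:: (1%:R - t); (t - t ^+ 2); (t ^+ 2 - t ^+ 3); (t ^+ 3)]; [:: (1%:R); 0; 0; 0]; [:: 0; (1%:R); 0; 0]] = mk4 [:: [:: (1%:R - t); (t - t ^+ 2 + t ^+ 4); (t ^+ 2 - t ^+ 3); (t ^+ 3 - t ^+ 4)]; [:: (1%:R - t); (t - t ^+ 2); (t ^+ 2 - t ^+ 3 + t ^+ 4); (t ^+ 3 - t ^+ 4)]; [:: (1%:R - t); (t - t ^+ 2); (t ^+ 2 - t ^+ 3); (t ^+ 3)]; [:: (1%:R); 0; 0; 0]].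
Proof. by mxeq; ring. Qed.

Lemma pS5 : mk4 [:: [:: (1%:R - t); (t - t ^+ 2); (t ^+ 2 - t ^+ 3); (t ^+ 3)]; [:: (1%:R); 0; 0; 0]; [:: 0; (1%:R); 0; 0]; [:: 0; 0; (1%:R); 0]] *m mk4 [:: [:: (1%:R - t); (t - t ^+ 2 + t ^+ 4); (t ^+ 2 - t ^+ 3); (t ^+ 3 - t ^+ 4)]; [:: (1%:R - t); (t - t ^+ 2); (t ^+ 2 - t ^+ 3 + t ^+ 4); (t ^+ 3 - t ^+ 4)]; [:: (1%:R - t); (t - t ^+ 2); (t ^+ 2 - t ^+ 3); (t ^+ 3)]; [:: (1%:R); 0; 0; 0]] = mk4 [:: [:: (1%:R - t + t ^+ 4); (t - t ^+ 2); (t ^+ 2 - t ^+ 3); (t ^+ 3 - t ^+ 4)]; [:: (1%:R - t); (t - t ^+ 2 + t ^+ 4); (t ^+ 2 - t ^+ 3); (t ^+ 3 - t ^+ 4)]; [:: (1%:R - t); (t - t ^+ 2); (t ^+ 2 - t ^+ 3 + t ^+ 4); (t ^+ 3 - t ^+ 4)]; [:: (1%:R - t); (t - t ^+ 2); (t ^+ 2 - t ^+ 3); (t ^+ 3)]].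
Proof. by mxeq; ring. Qed.

Lemma pQ2 : mk4 [:: [:: (1%:R); 0; 0; 0]; [:: 0; (1%:R - t); (t - t ^+ 2); (t ^+ 2)]; [:: 0; (1%:R); 0; 0]; [:: 0; 0; (1%:R); 0]] *m mk4 [:: [:: (1%:R); 0; 0; 0]; [:: 0; (1%:R - t); (t - t ^+ 2); (t ^+ 2)]; [:: 0; (1%:R); 0; 0]; [:: 0; 0; (1%:R); 0]] = mk4 [:: [:: (1%:R); 0; 0; 0]; [:: 0; (1%:R - t); (t - t ^+ 2 + t ^+ 3); (t ^+ 2 - t ^+ 3)]; [:: 0; (1%:R - t); (t - t ^+ 2); (t ^+ 2)]; [:: 0; (1%:R); 0; 0]].
Proof. by mxeq; ring. Qed.

Lemma pQ3 : mk4 [:: [:: (1%:R); 0; 0; 0]; [:: 0; (1%:R - t); (t - t ^+ 2); (t ^+ 2)]; [:: 0; (1%:R); 0; 0]; [:: 0; 0; (1%:R); 0]] *m mk4 [:: [:: (1%:R); 0; 0; 0]; [:: 0; (1%:R - t); (t - t ^+ 2 + t ^+ 3); (t ^+ 2 - t ^+ 3)]; [:: 0; (1%:R - t); (t - t ^+ 2); (t ^+ 2)]; [:: 0; (1%:R); 0; 0]] = mk4 [:: [:: (1%:R); 0; 0; 0]; [:: 0; (1%:R - t + t ^+ 3); (t - t ^+ 2); (t ^+ 2 - t ^+ 3)]; [:: 0; (1%:R - t); (t - t ^+ 2 + t ^+ 3); (t ^+ 2 - t ^+ 3)]; [:: 0; (1%:R - t); (t - t ^+ 2); (t ^+ 2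)]].
Proof. by mxeq; ring. Qed.

Lemma pQ4 : mk4 [:: [:: (1%:R); 0; 0; 0]; [:: 0; (1%:R - t); (t - t ^+ 2); (t ^+ 2)]; [:: 0; (1%:R); 0; 0]; [:: 0; 0; (1%:R); 0]] *m mk4 [:: [:: (1%:R); 0; 0; 0]; [:: 0; (1%:R - t + t ^+ 3); (t - t ^+ 2); (t ^+ 2 - t ^+ 3)]; [:: 0; (1%:R - t); (t - t ^+ 2 + t ^+ 3); (t ^+ 2 - t ^+ 3)]; [:: 0; (1%:R - t); (t - t ^+ 2); (t ^+ 2)]] = mk4 [:: [:: (1%:R); 0; 0; 0]; [:: 0; (1%:R - t + t ^+ 3 - t ^+ 4); (t - t ^+ 2 + t ^+ 4 - t ^+ 5); (t ^+ 2 - t ^+ 3 + t ^+ 5)]; [:: 0; (1%:R - t + t ^+ 3); (t - t ^+ 2); (t ^+ 2 - t ^+ 3)]; [:: 0; (1%:R - t); (t - t ^+ 2 + t ^+ 3); (t ^+ 2 - t ^+ 3)]].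
Proof. by mxeq; ring. Qed.

Lemma pQ5 : mk4 [:: [:: (1%:R); 0; 0; 0]; [:: 0; (1%:R - t); (t - t ^+ 2); (t ^+ 2)]; [:: 0; (1%:R); 0; 0]; [:: 0; 0; (1%:R); 0]] *m mk4 [:: [:: (1%:R); 0; 0; 0]; [:: 0; (1%:R - t + t ^+ 3 - t ^+ 4); (t - t ^+ 2 + t ^+ 4 - t ^+ 5); (t ^+ 2 - t ^+ 3 + t ^+ 5)]; [:: 0; (1%:R - t + t ^+ 3); (t - t ^+ 2); (t ^+ 2 - t ^+ 3)]; [:: 0; (1%:R - t); (t - t ^+ 2 + t ^+ 3); (t ^+ 2 - t ^+ 3)]] = mk4 [:: [:: (1%:R); 0; 0; 0]; [:: 0; (1%:R - t + t ^+ 3 - t ^+ 4); (t - t ^+ 2 + t ^+ 4 - t ^+ 5 + t ^+ 6); (t ^+ 2 - t ^+ 3 + t ^+ 5 - t ^+ 6)]; [:: 0; (1%:R - t + t ^+ 3 - t ^+ 4); (t - t ^+ 2 + t ^+ 4 - t ^+ 5); (t ^+ 2 - t ^+ 3 + t ^+ 5)]; [:: 0; (1%:R - t + t ^+ 3); (t - t ^+ 2); (t ^+ 2 - t ^+ 3)]].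
Proof. by mxeq; ring. Qed.

Lemma pQ6 : mk4 [:: [:: (1%:R); 0; 0; 0]; [:: 0; (1%:R - t); (t - t ^+ 2); (t ^+ 2)]; [:: 0; (1%:R); 0; 0]; [:: 0; 0; (1%:R); 0]] *m mk4 [:: [:: (1%:R); 0; 0; 0]; [:: 0; (1%:R - t + t ^+ 3 - t ^+ 4); (t - t ^+ 2 + t ^+ 4 - t ^+ 5 + t ^+ 6); (t ^+ 2 - t ^+ 3 + t ^+ 5 - t ^+ 6)]; [:: 0; (1%:R - t + t ^+ 3 - t ^+ 4); (t - t ^+ 2 + t ^+ 4 - t ^+ 5); (t ^+ 2 - t ^+ 3 + t ^+ 5)]; [:: 0; (1%:R - t + t ^+ 3); (t - t ^+ 2); (t ^+ 2 - t ^+ 3)]] = mk4 [:: [:: (1%:R); 0; 0; 0]; [:: 0; (1%:R - t + t ^+ 3 - t ^+ 4 + t ^+ 6); (t - t ^+ 2 + t ^+ 4 - t ^+ 5); (t ^+ 2 - t ^+ 3 + t ^+ 5 - t ^+ 6)]; [:: 0; (1%:R - t + t ^+ 3 - t ^+ 4); (t - t ^+ 2 + t ^+ 4 - t ^+ 5 + t ^+ 6); (t ^+ 2 - t ^+ 3 + t ^+ 5 - t ^+ 6)]; [:: 0; (1%:R - t + t ^+ 3 - t ^+ 4); (t - t ^+ 2 + t ^+ 4 - t ^+ 5); (t ^+ 2 - t ^+ 3 + t ^+ 5)]].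
Proof. by mxeq; ring. Qed.

Notation Gi3pl := [:: [:: (t); 0; 0; 0]; [:: 0; (t); 0; 0]; [:: 0; 0; 0; (t)]; [:: 0; 0; (1%:R); (- 1%:R + t)]].

Notation Q6l := [:: [:: (1%:R); 0; 0; 0]; [:: 0; (1%:R - t + t ^+ 3 - t ^+ 4 + t ^+ 6); (t - t ^+ 2 + t ^+ 4 - t ^+ 5); (t ^+ 2 - t ^+ 3 + t ^+ 5 - t ^+ 6)]; [:: 0; (1%:R - t + t ^+ 3 - t ^+ 4); (t - t ^+ 2 + t ^+ 4 - t ^+ 5 + t ^+ 6); (t ^+ 2 - t ^+ 3 + t ^+ 5 - t ^+ 6)]; [:: 0; (1%:R - t + t ^+ 3 - t ^+ 4); (t - t ^+ 2 + t ^+ 4 - t ^+ 5); (t ^+ 2 - t ^+ 3 + t ^+ 5)]].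

Lemma pBp : mk4 Gi3pl *m mk4 Q6l = mk4 [:: [:: (t * (1%:R)); (t * 0); (t * 0); (t * 0)]; [:: (t * 0); (t * (1%:R - t + t ^+ 3 - t ^+ 4 + t ^+ 6)); (t * (t - t ^+ 2 + t ^+ 4 - t ^+ 5)); (t * (t ^+ 2 - t ^+ 3 + t ^+ 5 - t ^+ 6))]; [:: (t * 0); (t * (1%:R - t + t ^+ 3 - t ^+ 4)); (t * (t - t ^+ 2 + t ^+ 4 - t ^+ 5)); (t * (t ^+ 2 - t ^+ 3 + t ^+ 5))]; [:: (t * 0); (t * (1%:R - t + t ^+ 3 - t ^+ 4)); (t * (t - t ^+ 2 + t ^+ 4)); (t * (t ^+ 2 - t ^+ 3))]].
Proof. by mxeq; ring. Qed.

Lemma pBs : ti *: mk4 [:: [:: (t * (1%:R)); (t * 0); (t * 0); (t * 0)]; [:: (t * 0); (t * (1%:R - t + t ^+ 3 - t ^+ 4 + t ^+ 6)); (t * (t - t ^+ 2 + t ^+ 4 - t ^+ 5)); (t * (t ^+ 2 - t ^+ 3 + t ^+ 5 - t ^+ 6))]; [:: (t * 0); (t * (1%:R - t + t ^+ 3 - t ^+ 4)); (t * (t - t ^+ 2 + t ^+ 4 - t ^+ 5)); (t * (t ^+ 2 - t ^+ 3 + t ^+ 5))]; [:: (t * 0); (t * (1%:R - t + t ^+ 3 - t ^+ 4)); (t * (t - t ^+ 2 + t ^+ 4)); (t * (t ^+ 2 - t ^+ 3))]] = mk4 [:: [:: (1%:R); 0; 0; 0]; [:: 0; (1%:R - t +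 t ^+ 3 - t ^+ 4 + t ^+ 6); (t - t ^+ 2 + t ^+ 4 - t ^+ 5); (t ^+ 2 - t ^+ 3 + t ^+ 5 - t ^+ 6)]; [:: 0; (1%:R - t + t ^+ 3 - t ^+ 4); (t - t ^+ 2 + t ^+ 4 - t ^+ 5); (t ^+ 2 - t ^+ 3 + t ^+ 5)]; [:: 0; (1%:R - t + t ^+ 3 - t ^+ 4); (t - t ^+ 2 + t ^+ 4); (t ^+ 2 - t ^+ 3)]].
Proof. mxeq. all: by rewrite mulrA (mulVf tneq0) mul1r. Qed.

Lemma pG3i : mk4 G3l *m mk4 Gi3pl = t%:M.
Proof. by mxeq; ring. Qed.

Notation Al := [:: [:: (1%:R - t); (t - t ^+ 2); (t ^+ 2); 0]; [:: (1%:R - t); (t - t ^+ 2); 0; (t ^+ 2)]; [:: (1%:R); 0; 0; 0]; [:: 0; (1%:R); 0; 0]].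
Notation Sl := [:: [:: (1%:R - t); (t - t ^+ 2); (t ^+ 2 - t ^+ 3); (t ^+ 3)]; [:: (1%:R); 0; 0; 0]; [:: 0; (1%:R); 0; 0]; [:: 0; 0; (1%:R); 0]].

Notation Pl x g := [:: [:: (g + x - t * g); (t * g - t ^+ 2 * g); (t ^+ 2 * g - t ^+ 3 * g); (t ^+ 3 * g - t ^+ 4 * g)]; [:: (g - t * g); (x + t * g - t ^+ 2 * g); (t ^+ 2 * g - t ^+ 3 * g); (t ^+ 3 * g - t ^+ 4 * g)]; [:: (g - t * g); (t * g - t ^+ 2 * g); (x + t ^+ 2 * g - t ^+ 3 * g); (t ^+ 3 * g - t ^+ 4 * g)]; [:: (g - t * g); (t * g - t ^+ 2 * g); (t ^+ 2 * g - t ^+ 3 * g); (x + t ^+ 3 * g - t ^+ 4 * g)]].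
Notation S4l := [:: [:: (1%:R - t + t ^+ 4); (t - t ^+ 2); (t ^+ 2 - t ^+ 3); (t ^+ 3 - t ^+ 4)]; [:: (1%:R - t); (t - t ^+ 2 + t ^+ 4); (t ^+ 2 - t ^+ 3); (t ^+ 3 - t ^+ 4)]; [:: (1%:R - t); (t - t ^+ 2); (t ^+ 2 - t ^+ 3 + t ^+ 4); (t ^+ 3 - t ^+ 4)]; [:: (1%:R - t); (t - t ^+ 2); (t ^+ 2 - t ^+ 3); (t ^+ 3)]].

Lemma pPstep (x g : LT) : mk4 (Pl x g) *m mk4 S4l = mk4 (Pl (x * t ^+ 4) (x + g)).
Proof. by mxeq; ring. Qed.

Lemma pAP (x g : LT): mk4 [:: [:: (1%:R - t); (t - t ^+ 2); (t ^+ 2); 0]; [:: (1%:R - t); (t - t ^+ 2); 0; (t ^+ 2)]; [:: (1%:R); 0; 0; 0]; [:: 0; (1%:R); 0; 0]] *m mk4 [:: [:: (g + x - t * g); (t * g - t ^+ 2 * g); (t ^+ 2 * g - t ^+ 3 * g); (t ^+ 3 * g - t ^+ 4 * g)]; [:: (g - t * g); (x + t * g - t ^+ 2 * g); (t ^+ 2 * g - t ^+ 3 * g); (t ^+ 3 * g - t ^+ 4 * g)]; [:: (g - t * g); (t * g - t ^+ 2 * g); (x + t ^+ 2 * g - t ^+ 3 * g); (t ^+ 3 * g - t ^+ 4 * g)]; [:: (g - t * g); (t * g - t ^+ 2 * g); (t ^+ 2 * g - t ^+ 3 * g); (x + t ^+ 3 * g - t ^+ 4 * g)]] = mk4 [::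 [:: (g + x - t * g - t * x); (t * g + t * x - t ^+ 2 * g - t ^+ 2 * x); (t ^+ 2 * g + t ^+ 2 * x - t ^+ 3 * g); (t ^+ 3 * g - t ^+ 4 * g)]; [:: (g + x - t * g - t * x); (t * g + t * x - t ^+ 2 * g - t ^+ 2 * x); (t ^+ 2 * g - t ^+ 3 * g); (t ^+ 2 * x + t ^+ 3 * g - t ^+ 4 * g)]; [:: (g + x - t * g); (t * g - t ^+ 2 * g); (t ^+ 2 * g - t ^+ 3 * g); (t ^+ 3 * g - t ^+ 4 * g)]; [:: (g - t * g); (x + t * g - t ^+ 2 * g); (t ^+ 2 * g - t ^+ 3 * g); (t ^+ 3 * g - t ^+ 4 * g)]].
Proof. by mxeq; ring. Qed.

Lemma pF (x g : LT): mk4 [:: [:: (g + x - t * g - t * x); (t * g + t * x - t ^+ 2 * g - t ^+ 2 * x); (t ^+ 2 * g + t ^+ 2 * x - t ^+ 3 * g); (t ^+ 3 * g - t ^+ 4 * g)]; [:: (g + x - t * g - t * x); (t * g + t * x - t ^+ 2 * g - t ^+ 2 * x); (t ^+ 2 * g - t ^+ 3 * g); (t ^+ 2 * x + t ^+ 3 * g - t ^+ 4 * g)]; [:: (g + x - t * g); (t * g - t ^+ 2 * g); (t ^+ 2 * g - t ^+ 3 * g); (t ^+ 3 * g - t ^+ 4 * g)]; [:: (g - t * g); (x + t * g - t ^+ 2 * g); (t ^+ 2 * g - t ^+ 3 * g); (t ^+ 3 * g - t ^+ 4 * g)]] *m mk4 [:: [:: (1%:R); 0; 0; 0]; [:: 0;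 (1%:R - t + t ^+ 3 - t ^+ 4 + t ^+ 6); (t - t ^+ 2 + t ^+ 4 - t ^+ 5); (t ^+ 2 - t ^+ 3 + t ^+ 5 - t ^+ 6)]; [:: 0; (1%:R - t + t ^+ 3 - t ^+ 4); (t - t ^+ 2 + t ^+ 4 - t ^+ 5); (t ^+ 2 - t ^+ 3 + t ^+ 5)]; [:: 0; (1%:R - t + t ^+ 3 - t ^+ 4); (t - t ^+ 2 + t ^+ 4); (t ^+ 2 - t ^+ 3)]] = mk4 [:: [:: (g + x - t * g - t * x); (t * g + t * x - t ^+ 2 * g - t ^+ 2 * x + t ^+ 4 * x - t ^+ 5 * x + t ^+ 7 * x - t ^+ 8 * x); (t ^+ 2 * g + t ^+ 2 * x - t ^+ 3 * g - t ^+ 3 * x + t ^+ 5 * x - t ^+ 6 * x); (t ^+ 3 * g + t ^+ 3 * x - t ^+ 4 * g - t ^+ 4 * x + t ^+ 6 * x - t ^+ 7 * x + t ^+ 8 * x)]; [:: (g + x - t * g - t * x); (t * g + t * x - t ^+ 2 * g - t ^+ 2 * x + t ^+ 4 * x - t ^+ 5 * x + t ^+ 7 * x - t ^+ 8 * x); (t ^+ 2 * g + t ^+ 2 * x - t ^+ 3 * g - t ^+ 3 * x + t ^+ 5 * x - t ^+ 6 * x + t ^+ 7 * x); (t ^+ 3 * g + t ^+ 3 * x - t ^+ 4 * g - t ^+ 4 * x + t ^+ 6 * x - 2%:R * t ^+ 7 * x + t ^+ 8 * x)]; [:: (g + x - t * g); (t * g - t ^+ 2 * g); (t ^+ 2 *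 g - t ^+ 3 * g); (t ^+ 3 * g - t ^+ 4 * g)]; [:: (g - t * g); (x + t * g - t * x - t ^+ 2 * g + t ^+ 3 * x - t ^+ 4 * x + t ^+ 6 * x); (t * x + t ^+ 2 * g - t ^+ 2 * x - t ^+ 3 * g + t ^+ 4 * x - t ^+ 5 * x); (t ^+ 2 * x + t ^+ 3 * g - t ^+ 3 * x - t ^+ 4 * g + t ^+ 5 * x - t ^+ 6 * x)]].
Proof. by mxeq; ring. Qed.

Notation Fl x g := [:: [:: (g + x - t * g - t * x); (t * g + t * x - t ^+ 2 * g - t ^+ 2 * x + t ^+ 4 * x - t ^+ 5 * x + t ^+ 7 * x - t ^+ 8 * x); (t ^+ 2 * g + t ^+ 2 * x - t ^+ 3 * g - t ^+ 3 * x + t ^+ 5 * x - t ^+ 6 * x); (t ^+ 3 * g + t ^+ 3 * x - t ^+ 4 * g - t ^+ 4 * x + t ^+ 6 * x - t ^+ 7 * x + t ^+ 8 * x)]; [:: (g + x - t * g - t * x); (t * g + t * x - t ^+ 2 * g - t ^+ 2 * x + t ^+ 4 * x - t ^+ 5 * x + t ^+ 7 * x - t ^+ 8 * x); (t ^+ 2 * g + t ^+ 2 * x - t ^+ 3 * g - t ^+ 3 * x + t ^+ 5 * x - t ^+ 6 * x + t ^+ 7 * x); (t ^+ 3 * g + t ^+ 3 * x - t ^+ 4 * g - t ^+ 4 * x + t ^+ 6 * x - 2%:R * t ^+ 7 * x + t ^+ 8 * x)]; [:: (g + x - t * g); (t * g - t ^+ 2 * g); (t ^+ 2 * g - t ^+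 3 * g); (t ^+ 3 * g - t ^+ 4 * g)]; [:: (g - t * g); (x + t * g - t * x - t ^+ 2 * g + t ^+ 3 * x - t ^+ 4 * x + t ^+ 6 * x); (t * x + t ^+ 2 * g - t ^+ 2 * x - t ^+ 3 * g + t ^+ 4 * x - t ^+ 5 * x); (t ^+ 2 * x + t ^+ 3 * g - t ^+ 3 * x - t ^+ 4 * g + t ^+ 5 * x - t ^+ 6 * x)]].

Lemma L1 : burau_letter 4 1 = mk4 G1l.
Proof. by rewrite /burau_letter /=; mxeq; ring. Qed.
Lemma L2 : burau_letter 4 2 = mk4 G2l.
Proof. by rewrite /burau_letter /=; mxeq; ring. Qed.
Lemma L3 : burau_letter 4 3 = mk4 G3l.
Proof. by rewrite /burau_letter /=; mxeq; ring. Qed.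
Lemma Li3 : burau_letter 4 (-3) = ti *: mk4 Gi3pl.
Proof.
rewrite /burau_letter /=.
have E : burau_gen 4 3 = mk4 G3l by mxeq; ring.
have H : mk4 G3l *m (ti *: mk4 Gi3pl) = 1%:M.
  by rewrite -scalemxAr pG3i scale_scalar_mx (mulVf tneq0).
rewrite E; case: (mulmx1_unit H) => U _.
by rewrite -[LHS]mulmx1 -H mulmxA mulVmx // mul1mx.
Qed.

Lemma powS4 n : (mk4 S4l) ^+ n = mk4 (Pl ((t ^+ 4) ^+ n) (\sum_(i < n) (t ^+ 4) ^+ i)).
Proof.
elim: n => [|n IH].
  rewrite expr0 big_ord0; change (1 : 'M[LT]_4) with (1%:M : 'M[LT]_4); mxeq; ring.
rewrite exprSr IH -mulmxE pPstep.
have -> : (t ^+ 4) ^+ n.+1 = (t ^+ 4) ^+ n * t ^+ 4 by rewrite [LHS]exprSr.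
by rewrite big_ord_recr /= addrC.
Qed.

Lemma pow4 (A : 'M[LT]_4) : A ^+ 4 = A *m (A *m (A *m A)).
Proof. by rewrite !exprS expr0 mulr1 !mulmxE. Qed.
Lemma pow6 (A : 'M[LT]_4) : A ^+ 6 = A *m (A *m (A *m (A *m (A *m A)))).
Proof. by rewrite !exprS expr0 mulr1 !mulmxE. Qed.

Lemma burau_nil : burau 4 [::] = 1%:M.
Proof. by []. Qed.

Lemma burau_cons2 m a b w : burau m (a :: b :: w) = burau_letter m a *m burau m (b :: w).
Proof. by []. Qed.
Lemma burau_one m a : burau m [:: a] = burau_letter m a.
Proof. by rewrite burau_cons mulmx1. Qed.

Lemma burau_K2 n : burau 4 (K2_word n) =
  mk4 (Fl ((t ^+ 4) ^+ n) (\sum_(i < n) (t ^+ 4) ^+ i)).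
Proof.
rewrite /K2_word (burau_cat _ [:: 2; 1; 3; 2]%R) (burau_cat _ (flatten (nseq (4 * n) [:: 1; 2; 3]%R))).
rewrite (burau_cat _ [:: (-3)%R]) (burau_pow 3 [:: 1; 2; 3]%R (4 * n)) (burau_pow 3 [:: 2; 3]%R 6).
rewrite !burau_cons2.
rewrite !burau_one.
rewrite L1 L2 L3 Li3.
rewrite pA1 pA2 pA3 pS1 pS2.
rewrite exprM pow4 pS3 pS4 pS5 powS4 pow6 pQ2 pQ3 pQ4 pQ5 pQ6.
by rewrite -scalemxAl pBp pBs mulmxA pAP pF.
Qed.


Lemma pD (p q : {poly int}) : polyF (p + q) = polyF p + polyF q.
Proof. exact: rmorphD. Qed.
Lemma pB (p q : {poly int}) : polyF (p - q) = polyF p - polyF q.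
Proof. exact: rmorphB. Qed.
Lemma pN (p : {poly int}) : polyF (- p) = - polyF p.
Proof. exact: rmorphN. Qed.
Lemma pX k : polyF 'X^k = t ^+ k.
Proof. exact: rmorphXn. Qed.
Lemma p1 : polyF 1 = 1.
Proof. exact: rmorph1. Qed.

Lemma sumG (k c d m : nat) :
  polyF (\sum_(0 <= i < m) ('X^(c + k * i) - 'X^(d + k * i))) =
  (t ^+ c - t ^+ d) * \sum_(i < m) (t ^+ k) ^+ i.
Proof.
rewrite /polyF rmorph_sum big_mkord mulr_sumr; apply: eq_bigr => i _.
by rewrite rmorphB !rmorphXn -/tvar !exprD !exprM mulrBl.
Qed.

Lemma sumS (q : LT) n : \sum_(i < n.+1) q ^+ i = \sum_(i < n) q ^+ i + q ^+ n.
Proof. by rewrite big_ord_recr. Qed.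

Lemma e8 n c : t ^+ (8 * n + c) = ((t ^+ 4) ^+ n) ^+ 2 * t ^+ c.
Proof. rewrite exprD; congr (_ * _); rewrite -!exprM; congr (_ ^+ _); lia. Qed.
Lemma e4 n c : t ^+ (4 * n + c) = (t ^+ 4) ^+ n * t ^+ c.
Proof. by rewrite exprD -exprM. Qed.

Lemma sum2 (q : LT) n : \sum_(i < 2 * n) q ^+ i = (1 + q) * \sum_(i < n) (q ^+ 2) ^+ i.
Proof.
elim: n => [|n IH]; first by rewrite muln0 !big_ord0 mulr0.
have -> : (2 * n.+1 = (2 * n).+2)%N by lia.
rewrite !big_ord_recr /= IH -exprM [q ^+ (2 * n).+1]exprS; ring.
Qed.

Theorem theorem3p2 (n : nat) (hn : (1 <= n)%N) :
  eq_up_to_units (alexander_closure 3 (K2_word n))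
    (polyF (
        \sum_(0 <= i < n.+1) ('X^(8 * n + 12 + 4 * i) - 'X^(8 * n + 11 + 4 * i))
      + ('X^(8 * n + 9) - 'X^(8 * n + 8))
      + \sum_(0 <= i < 2 * n) ('X^(4 * n + 8 + 2 * i) - 'X^(4 * n + 7 + 2 * i))
      + ('X^(4 * n + 6) - 'X^(4 * n + 4))
      + ('X^(4 * n + 3) - 'X^(4 * n + 1))
      + \sum_(0 <= i < n) ('X^(4 + 4 * i) - 'X^(1 + 4 * i))
      + 1)).
Proof.
exists false, 3%:Z.
rewrite !pD !sumG ?pB !pN !pX p1.
rewrite /alexander_closure burau_K2 alex_mk4 /fL [LHS]/=.
rewrite sumS sum2.
have -> : (t ^+ 2) ^+ 2 = t ^+ 4 by rewrite -exprM.
rewrite (e8 n 12) (e8 n 11) (e8 n 9) (e8 n 8) (e4 n 8) (e4 n 7) (e4 n 6) (e4 n 4) (e4 n 3) (e4 n 1).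
set g := \sum_(i < n) (t ^+ 4) ^+ i.
have Hx : (t ^+ 4) ^+ n = 1 + (t ^+ 4 - 1) * g by rewrite /g -subrX1 addrC subrK.
rewrite Hx expr0 mul1r.
change (t ^ 3%:Z) with (t ^+ 3).
clearbody g.
ring.
Qed.
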